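(* Let $(U,\Phi)$ be a translation-invariant quantum walk with an initial state $\Phi\in\mathcal H_0$. Then $(U,\Phi)$ is unitary equivalent to $(U_r,\Phi_{\alpha,\theta})$ for some $0\le r,\alpha\le1$ and $\theta\in\mathbb R$, where \[ U_r=\sum_{n\in\mathbb Z}|e_1^{n-1}\rangle\langle re_1^n+se_2^n|+|e_2^{n+1}\rangle\langle -se_1^n+re_2^n|,\quad s=\sqrt{1-r^2}, \] and $\Phi_{\alpha,\theta}=\alpha e_1^0+e^{i\theta}\sqrt{1-\alpha^2}\,e_2^0$. Moreover, for $0<r,r',\alpha,\alpha'<1$ and $\theta,\theta'\in[0,2\pi)$, $(U_r,\Phi_{\alpha,\theta})$ and $(U_{r'},\Phi_{\alpha',\theta'})$ are unitary equivalent if and only if $r=r'$, $\alpha=\alpha'$ and $\theta=\theta'$.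
   Context: Let $\mathcal H_n=\mathbb C^2$ for $n\in\mathbb Z$, $\mathcal H=\bigoplus_{n\in\mathbb Z}\mathcal H_n$, $P_n$ the orthogonal projection onto $\mathcal H_n$, and $\{e_1^n,e_2^n\}$ the standard basis of $\mathcal H_n$; each $\mathcal H_n$ is identified with $\mathbb C^2$. Dirac notation: $|x\rangle\langle y|$ is the operator $z\mapsto\langle y,z\rangle x$ (inner product conjugate-linear in the first argument). A one-dimensional quantum walk is a unitary $U$ on $\mathcal H$ with $\operatorname{rank}(P_nUP_m)=1$ if $m=n\pm1$ and $0$ otherwise. Every such $U$ can be written as $U=\sum_{n\in\mathbb Z}|\xi_{n-1,n}\rangle\langle\zeta_{n-1,n}|+|\xi_{n+1,n}\rangle\langle\zeta_{n+1,n}|$, where $\{\xi_{n,n+1},\xi_{n+1,n}\}_{n}$ and $\{\zeta_{n,n+1},\zeta_{n+1,n}\}_{n}$ are orthonormal bases of $\mathcal H$ with $\xi_{n,n+1},\zeta_{n+1,n}\in\mathcal H_n$ and $\xi_{n+1,n},\zeta_{n,n+1}\in\mathcal H_{n+1}$. $U$ is translation-invariant if it has such a representation for which there exist $\xi_1,\xi_2,\zeta_1,\zeta_2\in\mathbb C^2$ with $\xi_{n,n+1}=\xi_1$, $\xi_{n,n-1}=\xi_2$, $\zeta_{n-1,n}=\zeta_1$, $\zeta_{n+1,n}=\zeta_2$ for all $n\in\mathbb Z$. An initial state is a unit vector $\Phi\in\mathcal H_0$. Since a walk $U$ is identified with $e^{i\lambda}U$ and a state $\Phi$ with $e^{i\lambda}\Phi$,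 pairs $(U,\Phi)$ and $(U',\Phi')$ are called unitary equivalent if there exist $\lambda,\lambda'\in\mathbb R$ and a unitary $W=\bigoplus_nW_n$ ($W_n$ unitary on $\mathcal H_n$) with $e^{i\lambda}WUW^*=U'$ and $e^{i\lambda'}W\Phi=\Phi'$. *)

(* Defs.v *)
From mathcomp Require Import all_boot all_algebra complex.
From mathcomp Require Import reals trigo.
Set Implicit Arguments. Unset Strict Implicit. Unset Printing Implicit Defensive.
Import GRing.Theory Num.Theory ComplexField.
Local Open Scope complex_scope.
Local Open Scope ring_scope.

Section QW.
Variable R : realType.
Local Notation C := (R[i]).

(* A (banded) operator on H = ⊕_{n∈Z} C^2, given by its blocks
   U n m = P_n U P_m : H_m -> H_n, each identified with a 2x2 matrix. *)
Definition kernel := int -> int -> 'M[C]_2.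

Definition adjm (m n : nat) (A : 'M[C]_(m, n)) : 'M[C]_(n, m) :=
  \matrix_(i, j) (A j i)^*.

Definition inner (x y : 'cV[C]_2) : C := (adjm x *m y) 0 0.

Definition dirac (x y : 'cV[C]_2) : 'M[C]_2 := x *m adjm y.

Definition e1 : 'cV[C]_2 := delta_mx 0 0.
Definition e2 : 'cV[C]_2 := delta_mx 1 0.

Definition expi (t : R) : C := (cos t +i* sin t)%C.

Definition unitvec (x : 'cV[C]_2) : Prop := inner x x = 1.

Definition onb (x y : 'cV[C]_2) : Prop :=
  inner x x = 1 /\ inner y y = 1 /\ inner x y = 0.

(* Since only the blocks with |n-m| = 1 are nonzero, the
   block entries of U^* U and U U^* are the finite sums below (exactly). *)
Definition isQW (U : kernel) : Prop :=
  (forall n m : int,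
      \rank (U n m) = if (m == n + 1) || (m == n - 1) then 1%N else 0%N) /\
  (forall n m : int,
      \sum_(k <- [:: n - 1; n; n + 1]) adjm (U k n) *m U k m
      = if n == m then 1%:M else 0) /\
  (forall n m : int,
      \sum_(k <- [:: n - 1; n; n + 1]) U n k *m adjm (U m k)
      = if n == m then 1%:M else 0).

(* The walk  sum_n |xi1^{n-1}><zeta1^n| + |xi2^{n+1}><zeta2^n| :
   block (n-1, n) is |xi1><zeta1|, block (n+1, n) is |xi2><zeta2|. *)
Definition TIwalk (xi1 zeta1 xi2 zeta2 : 'cV[C]_2) : kernel :=
  fun n m => if m == n + 1 then dirac xi1 zeta1
             else if m == n - 1 then dirac xi2 zeta2 else 0.

Definition isTI (U : kernel) : Prop :=
  isQW U /\
  exists xi1 xi2 zeta1 zeta2 : 'cV[C]_2,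
    onb xi1 xi2 /\ onb zeta1 zeta2 /\
    forall n m, U n m = TIwalk xi1 zeta1 xi2 zeta2 n m.

Definition ueq (U : kernel) (Phi : 'cV[C]_2) (U' : kernel) (Phi' : 'cV[C]_2)
  : Prop :=
  exists (l l' : R) (W : int -> 'M[C]_2),
    (forall n, adjm (W n) *m W n = 1%:M /\ W n *m adjm (W n) = 1%:M) /\
    (forall n m, expi l *: (W n *m U n m *m adjm (W m)) = U' n m) /\
    expi l' *: (W 0 *m Phi) = Phi'.

Definition Ur (r : R) : kernel :=
  let s := Num.sqrt (1 - r ^+ 2) in
  TIwalk e1 (r%:C *: e1 + s%:C *: e2) e2 (- s%:C *: e1 + r%:C *: e2).

Definition Phi_at (a t : R) : 'cV[C]_2 :=
  a%:C *: e1 + (expi t * (Num.sqrt (1 - a ^+ 2))%:C) *: e2.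

End QW.

(* Main.v *)
Require Import Defs.
From mathcomp Require Import all_boot all_algebra complex.
From mathcomp Require Import reals trigo.
From mathcomp Require Import ring lra.
Import GRing.Theory Num.Theory.
Local Open Scope complex_scope.
Local Open Scope ring_scope.

Section H.
Variable R : realType.
Local Notation C := R[i].

Lemma sum2 (F : 'I_2 -> C) : \sum_i F i = F 0 + F 1.
Proof. rewrite big_ord_recl big_ord1; congr (F _ + F _); exact: val_inj. Qed.

Lemma ord2 (i : 'I_2) : i = 0 \/ i = 1.
Proof. case: i => [[|[|k]]] H; [left|right|]; try exact: val_inj; by []. Qed.

Lemma mx2P (A B : 'M[C]_2) : A 0 0 = B 0 0 -> A 0 1 = B 0 1 ->
  A 1 0 = B 1 0 -> A 1 1 = B 1 1 -> A = B.
Proof.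
move=> h1 h2 h3 h4; apply/matrixP => i j.
by case: (ord2 i) => ->; case: (ord2 j) => ->.
Qed.

Lemma cv2P (A B : 'cV[C]_2) : A 0 0 = B 0 0 -> A 1 0 = B 1 0 -> A = B.
Proof.
move=> h1 h2; apply/matrixP => i j; rewrite (ord1 j).
by case: (ord2 i) => ->.
Qed.

Lemma diracE (x y : 'cV[C]_2) i j : dirac x y i j = x i 0 * (y j 0)^*.
Proof. by rewrite /dirac !mxE big_ord1 mxE. Qed.

Lemma innerE (x y : 'cV[C]_2) :
  inner x y = (x 0 0)^* * y 0 0 + (x 1 0)^* * y 1 0.
Proof. by rewrite /inner !mxE sum2 !mxE. Qed.

Lemma mulcvE (A : 'M[C]_2) (x : 'cV[C]_2) i :
  (A *m x) i 0 = A i 0 * x 0 0 + A i 1 * x 1 0.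
Proof. by rewrite !mxE sum2. Qed.

Lemma e1E0 : e1 R 0 0 = 1. Proof. by rewrite mxE. Qed.
Lemma e1E1 : e1 R 1 0 = 0. Proof. by rewrite mxE. Qed.
Lemma e2E0 : e2 R 0 0 = 0. Proof. by rewrite mxE. Qed.
Lemma e2E1 : e2 R 1 0 = 1. Proof. by rewrite mxE. Qed.

Lemma adjmM m n p (A : 'M[C]_(m, n)) (B : 'M[C]_(n, p)) :
  adjm (A *m B) = adjm B *m adjm A.
Proof.
apply/matrixP => i j; rewrite !mxE rmorph_sum; apply: eq_bigr => k _.
by rewrite !mxE rmorphM mulrC.
Qed.

Lemma dirac_conj (A B : 'M[C]_2) x y :
  A *m dirac x y *m adjm B = dirac (A *m x) (B *m y).
Proof. by rewrite /dirac adjmM !mulmxA. Qed.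

Lemma conjR (a : R) : (a%:C)^* = a%:C.
Proof. exact: conjc_real. Qed.

Lemma expiM (a b : R) : expi a * expi b = expi (a + b).
Proof.
rewrite /expi cosD sinD; apply/eqP; rewrite eq_complex /=.
by apply/andP; split; apply/eqP; ring.
Qed.

Lemma expiJ (a : R) : (expi a)^* = expi (- a).
Proof. by rewrite /expi cosN sinN. Qed.

Lemma expi0 : expi (0 : R) = 1.
Proof. by rewrite /expi cos0 sin0. Qed.

Lemma expiU (a : R) : expi a * (expi a)^* = 1.
Proof. by rewrite expiJ expiM subrr expi0. Qed.

End H.

Section H.
Variable R : realType.
Local Notation C := R[i].

Lemma unit_expi (u : C) : u * u^* = 1 -> exists t : R, expi t = u.
Proof.
case: u => a b /= /eqP; rewrite eq_complex /= => /andP[/eqP h _].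
have hab : a ^+ 2 + b ^+ 2 = 1 by rewrite -h; ring.
have ha : -1 <= a <= 1.
  apply/andP; split; nra.
have hs : Num.sqrt (1 - a ^+ 2) = `|b|.
  by rewrite -hab addrC addKr sqrtr_sqr.
case: (lerP 0 b) => hb.
- exists (acos a); rewrite /expi sin_acos // hs ger0_norm //.
  by rewrite acosK // in_itv /=.
- exists (- acos a); rewrite /expi cosN sinN sin_acos // hs ltr0_norm // opprK.
  by rewrite acosK // in_itv /=.
Qed.

End H.

Section H.
Variable R : realType.
Local Notation C := R[i].

Lemma cjM (x y : C) : (x * y)^* = x^* * y^*. Proof. exact: rmorphM. Qed.
Lemma cjV (x : C) : (x^-1)^* = (x^*)^-1. Proof. exact: fmorphV. Qed.
Lemma cjD (x y : C) : (x + y)^* = x^* + y^*. Proof. exact: rmorphD. Qed.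
Lemma cjB (x y : C) : (x - y)^* = x^* - y^*. Proof. exact: rmorphB. Qed.
Lemma cjN (x : C) : (- x)^* = - x^*. Proof. exact: rmorphN. Qed.
Lemma cj1 : (1 : C)^* = 1. Proof. exact: rmorph1. Qed.
Lemma cj0 : (0 : C)^* = 0. Proof. exact: rmorph0. Qed.
Lemma cjK (x : C) : (x^*)^* = x. Proof. exact: conjCK. Qed.

Lemma nJ (z : C) : (`|z|)^* = `|z|.
Proof. exact: conj_normC. Qed.

Definition ph (z : C) : C := if z == 0 then 1 else z / `|z|.

Lemma phE z : z = `|z| * ph z.
Proof.
rewrite /ph; case: eqP => [->|/eqP nz]; first by rewrite normr0 mul0r.
have nz' : `|z| != 0 by rewrite normr_eq0.
by field.
Qed.

Lemma phU z : ph z * (ph z)^* = 1.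
Proof.
rewrite /ph; case: eqP => [_|/eqP nz]; first by rewrite rmorph1 mulr1.
have nz' : `|z| != 0 by rewrite normr_eq0.
rewrite cjM cjV nJ.
transitivity ((z * z^*) / (`|z| ^+ 2)); first by field.
by rewrite normCK divff // -normCK expf_neq0.
Qed.

Lemma unitJ (x : C) : x * x^* = 1 -> x^* = x^-1 /\ x != 0.
Proof.
move=> h; have nz : x != 0.
  by apply/eqP => x0; move: h; rewrite x0 mul0r => /eqP; rewrite eq_sym oner_eq0.
split => //; apply: (mulfI nz); by rewrite h mulfV.
Qed.

Lemma normR (z : C) : (Normc.normc z)%:C = `|z|.
Proof. by rewrite normc_def; case: z. Qed.

Lemma normR_ge0 (z : C) : 0 <= Normc.normc z.
Proof. by case: z => a b; apply: sqrtr_ge0. Qed.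

Lemma normsq (x y : C) : x * x^* + y * y^* = 1 ->
  0 <= Normc.normc x <= 1 /\ (Num.sqrt (1 - (Normc.normc x) ^+ 2))%:C = `|y|.
Proof.
move=> h.
have e : (Normc.normc x) ^+ 2 + (Normc.normc y) ^+ 2 = 1.
  have : (Normc.normc x)%:C ^+ 2 + (Normc.normc y)%:C ^+ 2 = 1.
    by rewrite !normR !normCK h.
  move/eqP; rewrite eq_complex /= => /andP[/eqP e _].
  by rewrite -e; ring.
have ha := normR_ge0 x; have hb := normR_ge0 y.
split; first by apply/andP; split; nra.
have -> : 1 - Normc.normc x ^+ 2 = Normc.normc y ^+ 2 by rewrite -e addrC addKr.
by rewrite sqrtr_sqr ger0_norm // normR.
Qed.

Lemma inner_conj (x y : 'cV[C]_2) : inner y x = (inner x y)^*.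
Proof. by rewrite !innerE cjD !cjM !cjK mulrC (mulrC (x 1 0)). Qed.

Lemma scE (c : C) (M : 'M[C]_2) i j : (c *: M) i j = c * M i j.
Proof. by rewrite mxE. Qed.
Lemma scvE (c : C) (M : 'cV[C]_2) i j : (c *: M) i j = c * M i j.
Proof. by rewrite mxE. Qed.

Lemma comb0 (a b : C) : (a *: e1 R + b *: e2 R) 0 0 = a.
Proof. rewrite !mxE /= ?mulr1n ?mulr0n. ring. Qed.
Lemma comb1 (a b : C) : (a *: e1 R + b *: e2 R) 1 0 = b.
Proof. rewrite !mxE /= ?mulr1n ?mulr0n. ring. Qed.

Definition D (d1 d2 : C) : 'M[C]_2 :=
  \matrix_(i, j) (if i == j then (if i == 0 then d1 else d2) else 0).

Lemma Dv0 d1 d2 (v : 'cV[C]_2) : (D d1 d2 *m v) 0 0 = d1 * v 0 0.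
Proof. rewrite mulcvE !mxE /= ?mulr1n ?mulr0n. ring. Qed.
Lemma Dv1 d1 d2 (v : 'cV[C]_2) : (D d1 d2 *m v) 1 0 = d2 * v 1 0.
Proof. rewrite mulcvE !mxE /= ?mulr1n ?mulr0n. ring. Qed.

Lemma DU d1 d2 : d1 * d1^* = 1 -> d2 * d2^* = 1 -> D d1 d2 *m adjm (D d1 d2) = 1%:M.
Proof.
move=> h1 h2; apply: mx2P; rewrite !mxE !sum2 !mxE /= ?mulr1n ?mulr0n ?cj0.
all: try ring.
- by rewrite h1; ring.
- by rewrite h2; ring.
Qed.

End H.

Section P1.
Variable R : realType.
Local Notation C := R[i].

Arguments ph {R}.
Arguments D {R}.
Arguments unit_expi {R u}.
Arguments unitJ {R x}.
Arguments normsq {R x y}.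
Arguments expiU {R}.
Arguments expiM {R}.
Arguments expiJ {R}.
Lemma polar (z : C) : exists P, P * P^* = 1 /\ z = (Normc.normc z)%:C * P.
Proof. exists (ph z); split; first exact: phU. by rewrite normR -phE. Qed.

Lemma part1 (U : kernel R) (Phi : 'cV[C]_2) : isTI U -> unitvec Phi ->
  exists (r a t : R), 0 <= r <= 1 /\ 0 <= a <= 1 /\ ueq U Phi (Ur r) (Phi_at a t).
Proof.
move=> [_ [xi1 [xi2 [z1 [z2 [[h11 [h22 h12]] [[k11 [k22 k12]] HU]]]]]]] hPhi.
have h21 : inner xi2 xi1 = 0 by rewrite inner_conj h12 cj0.
pose V : 'M[C]_2 := \matrix_(i, j) (if i == 0 then (xi1 j 0)^* else (xi2 j 0)^*).
have V0 x : (V *m x) 0 0 = inner xi1 x by rewrite mulcvE !mxE innerE.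
have V1 x : (V *m x) 1 0 = inner xi2 x by rewrite mulcvE !mxE innerE.
have VV : V *m adjm V = 1%:M.
  apply: mx2P; rewrite !mxE !sum2 !mxE /= !cjK ?mulr1n ?mulr0n.
  - by move: h11; rewrite innerE.
  - by move: h12; rewrite innerE.
  - by move: h21; rewrite innerE.
  - by move: h22; rewrite innerE.
have VV' := mulmx1C VV.
have Vin x y : inner (V *m x) (V *m y) = inner x y.
  by rewrite /inner adjmM -mulmxA (mulmxA (adjm V)) VV' mul1mx.
have Vn x : inner xi1 x * (inner xi1 x)^* + inner xi2 x * (inner xi2 x)^* = inner x x.
  by rewrite -[inner x x]Vin [RHS]innerE V0 V1 mulrC (mulrC (inner xi2 x)).
have E1 := Vn z1; rewrite k11 in E1.
have E2 := Vn z2; rewrite k22 in E2.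
have E3 : (inner xi1 z1)^* * inner xi1 z2 + (inner xi2 z1)^* * inner xi2 z2 = 0.
  by rewrite -k12 -[inner z1 z2]Vin [RHS]innerE !V0 !V1.
have EP := Vn Phi; rewrite hPhi in EP.
move Ep : (inner xi1 z1) E1 E3 => p E1 E3.
move Eq : (inner xi2 z1) E1 E3 => q E1 E3.
move Ep' : (inner xi1 z2) E2 E3 => p' E2 E3.
move Eq' : (inner xi2 z2) E2 E3 => q' E2 E3.
pose mu := p * q' - q * p'.
have Hq' : q' = mu * p^*.
  apply/eqP; rewrite -subr_eq0; apply/eqP.
  have -> : q' - mu * p^* = q' * (1 - (p * p^* + q * q^*)) + q * (p^* * p' + q^* * q').
    by rewrite /mu; ring.
  by rewrite E1 E3; ring.
have Hp' : p' = - (mu * q^*).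
  apply/eqP; rewrite -subr_eq0 opprK; apply/eqP.
  have -> : p' + mu * q^* = p' * (1 - (p * p^* + q * q^*)) + p * (p^* * p' + q^* * q').
    by rewrite /mu; ring.
  by rewrite E1 E3; ring.
have Hmu : mu * mu^* = 1.
  have : mu * mu^* * (p * p^* + q * q^*) = 1.
    by rewrite -E2 Hq' Hp' cjN !cjM !cjK; ring.
  by rewrite E1 mulr1.
have [tm etm] := unit_expi Hmu.
have [c [cU [cc [lc elc]]]] : exists c, c * c^* = 1 /\ c * c = mu /\ exists l, expi l = c.
  exists (expi (tm / 2)); split; first exact: expiU.
  split; last by exists (tm / 2).
  by rewrite expiM -splitr etm.
have [cJ cnz] := unitJ cU.
have [P [PU pE]] := polar p.
have [Q [QU qE]] := polar q.
have [PJ Pnz] := unitJ PU.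
have [QJ Qnz] := unitJ QU.
have [hr hs] := normsq E1.
rewrite -normR in hs.
move: (Normc.normc p) (Normc.normc q) pE qE hr hs => r s pE qE hr hs.
have gU : (c / P) * (c / P)^* = 1.
  rewrite cjM cjV cJ PJ; field; by rewrite ?Pnz ?cnz.
have [beta eb] := unit_expi gU.
have [gJ gnz] := unitJ gU.
pose a (n : int) := expi (n%:~R * beta).
have aJ n : (a n)^* = (a n)^-1 by case: (unitJ (expiU (n%:~R * beta))).
have anz n : a n != 0 by case: (unitJ (expiU (n%:~R * beta))).
have aS n : a (n + 1) = a n * (c / P).
  rewrite /a -eb expiM; congr expi; rewrite intrD mulrDl; congr (_ + _).
  by rewrite mul1r.
have aP n : a (n - 1) = a n / (c / P).
  have : a (n - 1) * (c / P) = a n.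
    rewrite /a -eb expiM; congr expi; rewrite intrB mulrBl.
    rewrite mul1r; ring.
  move=> <-; field; by rewrite ?Pnz ?cnz.
pose h := P / Q.
pose W (n : int) := D (a n) (h * a n) *m V.
have Wx0 n x : (W n *m x) 0 0 = a n * inner xi1 x by rewrite -mulmxA Dv0 V0.
have Wx1 n x : (W n *m x) 1 0 = h * a n * inner xi2 x by rewrite -mulmxA Dv1 V1.
have WU n : W n *m adjm (W n) = 1%:M.
  rewrite adjmM mulmxA -(mulmxA (D _ _)) VV mulmx1 DU //.
    by rewrite /a; apply: expiU.
  rewrite /h !cjM cjV aJ PJ QJ; field; by rewrite ?Pnz ?Qnz ?anz.
have [hx hy] := normsq EP.
have [X [XU xE]] := polar (inner xi1 Phi).
have [Y [YU yE]] := polar (inner xi2 Phi).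
have [XJ Xnz] := unitJ XU.
have [YJ Ynz] := unitJ YU.
rewrite -normR in hy.
move: (Normc.normc (inner xi1 Phi)) (Normc.normc (inner xi2 Phi)) xE yE hx hy
  => al be xE yE hx hy.
have X'U : X^* * (X^*)^* = 1 by rewrite cjK mulrC.
have [l' el'] := unit_expi X'U.
have TU : (X^* * h * Y) * (X^* * h * Y)^* = 1.
  rewrite /h !cjM cjV cjK XJ YJ PJ QJ; field; by rewrite ?Pnz ?Qnz ?Xnz ?Ynz.
have [th eth] := unit_expi TU.
exists r, al, th; split => //; split => //.
exists lc, l', W; split.
  move=> n; split; [exact: mulmx1C (WU n) | exact: WU n].
split; last first.
  have a0 : a 0 = 1 by rewrite /a mulr0z mul0r expi0.
  rewrite /Phi_at el' eth; apply: cv2P; rewrite !scvE ?Wx0 ?Wx1 ?comb0 ?comb1 a0 ?hy ?xE ?yE;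
  rewrite /h ?cjM ?cjV ?cjN ?cjK ?XJ ?YJ ?PJ ?QJ ?conjR; field; by rewrite ?Pnz ?Qnz ?Xnz ?Ynz.
move=> n m; rewrite HU /Ur /TIwalk /=.
case: eqP => [->|_].
  rewrite dirac_conj elc; apply: mx2P; rewrite !scE !diracE ?Wx0 ?Wx1 ?h11 ?h21 ?Ep ?Eq ?e1E0 ?e1E1 ?comb0 ?comb1 ?hs ?aS ?pE ?qE;
  rewrite /h ?cjM ?cjV ?cjN ?cjK ?aJ ?cJ ?PJ ?QJ ?conjR; field; by rewrite ?Pnz ?Qnz ?cnz ?anz.
case: eqP => [->|_]; last by rewrite mulmx0 mul0mx scaler0.
have [muJ munz] := unitJ Hmu.
have p'J : p'^* = - (q / (c * c)) by rewrite Hp' cjN cjM cjK muJ cc; field.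
have q'J : q'^* = p / (c * c) by rewrite Hq' cjM cjK muJ cc; field.
rewrite dirac_conj elc; apply: mx2P; rewrite !scE !diracE ?Wx0 ?Wx1 ?h22 ?h12 ?Ep' ?Eq' ?e2E0 ?e2E1 ?comb0 ?comb1 ?hs /h ?cjM ?cjV ?aJ ?PJ ?QJ ?p'J ?q'J ?cjN ?conjR ?aP ?pE ?qE;
  field; by rewrite ?Pnz ?Qnz ?cnz ?anz.
Qed.
End P1.

Arguments unitJ {R x}.
Arguments expiU {R}.

Section P2.
Variable R : realType.
Local Notation C := R[i].

Lemma liftsq (x y : R) : x ^+ 2 + y ^+ 2 = 1 -> x%:C ^+ 2 + y%:C ^+ 2 = 1 :> C.
Proof.
move=> h; apply/eqP; rewrite eq_complex /=; apply/andP; split; apply/eqP.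
  by rewrite -h; ring.
by ring.
Qed.

Lemma unliftsq (x y : R) : x%:C ^+ 2 = y%:C ^+ 2 :> C -> x ^+ 2 = y ^+ 2.
Proof.
move/eqP; rewrite eq_complex /= => /andP[/eqP e _].
by move: e; rewrite !expr2 => e; nra.
Qed.

Lemma key (k E E' : C) (x y x' y' : R) : 0 < x -> 0 < x' ->
  x ^+ 2 + y ^+ 2 = 1 -> x' ^+ 2 + y' ^+ 2 = 1 -> E * E^* = 1 -> E' * E'^* = 1 ->
  k * x%:C = x'%:C -> k * E * y%:C = E' * y'%:C -> x = x' /\ k = 1.
Proof.
move=> hx hx' h h' hE hE' e1 e2.
have e1c : k^* * x%:C = x'%:C.
  by move: e1 => /(congr1 Num.conj); rewrite cjM !conjR.
have e2c : k^* * E^* * y%:C = E'^* * y'%:C.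
  by move: e2 => /(congr1 Num.conj); rewrite !cjM !conjR.
have s1 : k * k^* * x%:C ^+ 2 = x'%:C ^+ 2.
  transitivity ((k * x%:C) * (k^* * x%:C)); first by ring.
  by rewrite e1 e1c expr2.
have s2 : k * k^* * y%:C ^+ 2 = y'%:C ^+ 2.
  rewrite -[LHS]mulr1 -hE.
  transitivity ((k * E * y%:C) * (k^* * E^* * y%:C)); first by ring.
  rewrite e2 e2c.
  transitivity (E' * E'^* * y'%:C ^+ 2); first by ring.
  by rewrite hE' mul1r.
have K1 : k * k^* = 1.
  by rewrite -[_ * _]mulr1 -(liftsq _ _ h) mulrDr s1 s2 (liftsq _ _ h') (liftsq _ _ h).
have hxx : x = x'.
  have := s1; rewrite K1 mul1r => /unliftsq ?; nra.
split => //.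
have xnz : x%:C != 0 :> C.
  by rewrite eq_complex /= negb_and (lt0r_neq0 hx).
by apply: (mulIf xnz); rewrite mul1r e1 hxx.
Qed.

Lemma expi_inj (t t' : R) : 0 <= t < 2 * pi -> 0 <= t' < 2 * pi ->
  expi t = expi t' -> t = t'.
Proof.
move=> /andP[t0 t1] /andP[t0' t1'] /eqP; rewrite eq_complex /= => /andP[/eqP ec /eqP es].
have pi0 : 0 < pi :> R by exact: pi_gt0.
have sub (u : R) : pi < u < 2 * pi -> sin u < 0 /\ cos (u - pi) = - cos u.
  move=> /andP[a b]; have : 0 < u - pi < pi by apply/andP; split; lra.
  move=> /sin_gt0_pi hs.
  have e := sinDpi (u - pi); have e' := cosDpi (u - pi).
  rewrite subrK in e e'; split; lra.
case: (lerP t pi) => ht; case: (lerP t' pi) => ht'.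
- by apply: cos_inj => //; rewrite in_itv /=; apply/andP; split.
- have : 0 <= sin t by apply: sin_ge0_pi; apply/andP; split.
  have [] : sin t' < 0 /\ cos (t' - pi) = - cos t' by apply: sub; apply/andP; split.
  lra.
- have : 0 <= sin t' by apply: sin_ge0_pi; apply/andP; split.
  have [] : sin t < 0 /\ cos (t - pi) = - cos t by apply: sub; apply/andP; split.
  lra.
- have [_ c1] : sin t < 0 /\ cos (t - pi) = - cos t by apply: sub; apply/andP; split.
  have [_ c2] : sin t' < 0 /\ cos (t' - pi) = - cos t' by apply: sub; apply/andP; split.
  have : t - pi = t' - pi.
    apply: cos_inj; rewrite ?in_itv /=; try (apply/andP; split; lra).
    by rewrite c1 c2 ec.
  lra.
Qed.

End P2.

Arguments unitJ {R x}.
Arguments expiU {R}.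

Arguments key {R}.
Arguments expi_inj {R}.

Section P3.
Variable R : realType.
Local Notation C := R[i].

Lemma Me2 (M : 'M[C]_2) i : (M *m e2 R) i 0 = M i 1.
Proof. by rewrite mulcvE e2E0 e2E1; ring. Qed.
Lemma Mcomb (M : 'M[C]_2) (a b : C) i : (M *m (a *: e1 R + b *: e2 R)) i 0 = M i 0 * a + M i 1 * b.
Proof. by rewrite mulcvE comb0 comb1. Qed.

Lemma sq1 (r : R) : 0 < r < 1 -> 0 < Num.sqrt (1 - r ^+ 2) /\ r ^+ 2 + Num.sqrt (1 - r ^+ 2) ^+ 2 = 1.
Proof.
move=> /andP[h0 h1].
have hp : 0 < 1 - r ^+ 2 by nra.
split; first by rewrite sqrtr_gt0.
rewrite sqr_sqrtr; [ring | lra].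
Qed.

Lemma psq (x y : R) : 0 < x -> 0 < y -> x ^+ 2 = y ^+ 2 -> x = y.
Proof. move=> hx hy e. have : (x - y) * (x + y) = 0 by rewrite -subr_sqr e subrr.
move/eqP; rewrite mulf_eq0 => /orP[/eqP h|/eqP h]; [by apply/eqP; rewrite -subr_eq0 h | lra]. Qed.

Lemma cnz0 (x : R) : 0 < x -> x%:C != 0 :> C.
Proof. by move=> hx; rewrite eq_complex /= negb_and (lt0r_neq0 hx). Qed.

Lemma part2 (r r' a a' t t' : R) : 0 < r < 1 -> 0 < r' < 1 -> 0 < a < 1 -> 0 < a' < 1 ->
  0 <= t < 2 * pi -> 0 <= t' < 2 * pi ->
  ueq (Ur r) (Phi_at a t) (Ur r') (Phi_at a' t') -> r = r' /\ a = a' /\ t = t'.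
Proof.
move=> hr hr' ha ha' ht ht' [l [l' [W [HW [HU HP]]]]].
have eA := HU (-1) 0; have eB := HU 0 (-1).
rewrite /Ur /TIwalk /= in eA eB.
have [s0 hs] := sq1 _ hr; have [s0' hs'] := sq1 _ hr'.
have [g0 hg] := sq1 _ ha; have [g0' hg'] := sq1 _ ha'.
move: (Num.sqrt (1 - r ^+ 2)) s0 hs eA eB => s s0 hs eA eB.
move: (Num.sqrt (1 - r' ^+ 2)) s0' hs' eA eB => s' s0' hs' eA eB.
rewrite /Phi_at in HP.
move: (Num.sqrt (1 - a ^+ 2)) g0 hg HP => g g0 hg HP.
move: (Num.sqrt (1 - a' ^+ 2)) g0' hg' HP => g' g0' hg' HP.
rewrite (dirac_conj R (W (-1)) (W 0)) in eA; rewrite (dirac_conj R (W 0) (W (-1))) in eB.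
have cU := expiU l.
have [cJ cnz] := unitJ cU.
move: (expi l) cU cJ cnz eA eB => c cU cJ cnz eA eB.
have B01 := congr1 (fun M : 'M[C]_2 => M 0 1) eB; have B11 := congr1 (fun M : 'M[C]_2 => M 1 1) eB.
rewrite /= !scE !diracE !Me2 ?e2E0 ?e2E1 ?comb1 in B01 B11.
have r'nz : r'%:C != 0 :> C by apply: cnz0; case/andP: hr'.
have W01 : W 0 0 1 = 0.
  have e : W 0 0 1 * (1 * (r'%:C)^*) = W 0 1 1 * (0 * (r'%:C)^*).
    by rewrite -B11 -B01; ring.
  rewrite mul0r mulr0 mul1r conjR in e; move/eqP: e; rewrite mulf_eq0 => /orP[/eqP //|].
  by rewrite (negbTE r'nz).
have HW0 := (HW 0).1.
have U01 := congr1 (fun M : 'M[C]_2 => M 0 1) HW0; have U11 := congr1 (fun M : 'M[C]_2 => M 1 1) HW0.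
have U00 := congr1 (fun M : 'M[C]_2 => M 0 0) HW0.
rewrite /= !mxE !sum2 !mxE /= ?mulr0n ?mulr1n in U01 U11 U00.
rewrite W01 cj0 mul0r add0r in U11.
have [d2J d2nz] : (W 0 1 1)^* = (W 0 1 1)^-1 /\ W 0 1 1 != 0 by apply: unitJ; rewrite mulrC.
have W10 : W 0 1 0 = 0.
  rewrite W01 mulr0 add0r in U01; move/eqP: U01; rewrite mulf_eq0 (negbTE d2nz) orbF => /eqP e.
  by rewrite -[W 0 1 0]cjK e cj0.
rewrite W10 cj0 mul0r addr0 in U00.
have [d1J d1nz] : (W 0 0 0)^* = (W 0 0 0)^-1 /\ W 0 0 0 != 0 by apply: unitJ; rewrite mulrC.
have A00 := congr1 (fun M : 'M[C]_2 => M 0 0) eA; have A01 := congr1 (fun M : 'M[C]_2 => M 0 1) eA.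
rewrite /= !scE !diracE e1E0 ?comb0 ?comb1 !Mcomb W01 W10 in A00 A01.
have hr0 : 0 < r by case/andP: hr.
have hr0' : 0 < r' by case/andP: hr'.
have [hrr k1] : r = r' /\ c * (W (-1) *m e1 R) 0 0 * (W 0 0 0)^* = 1.
  apply: (@key R _ (W 0 0 0 * (W 0 1 1)^*) 1 _ s _ s' hr0 hr0' hs hs').
  - rewrite cjM cjK d1J d2J; field; by rewrite ?d1nz ?d2nz.
  - by rewrite cj1 mulr1.
  - move: A00; rewrite cjD !cjM !conjR (_ : (0:R)%:C = 0 :> C) // mul0r addr0 mul1r => <-; ring.
  - move: A01; rewrite cjD !cjM !conjR (_ : (0:R)%:C = 0 :> C) // mul0r add0r mul1r => <-.
    rewrite d1J d2J; field; by rewrite ?d1nz ?d2nz.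
have hss : s = s'.
  apply: psq => //; move: hs hs'; rewrite hrr => hs hs'.
  by apply: (addrI (r' ^+ 2)); rewrite hs hs'.
have snz : s%:C != 0 :> C by apply: cnz0.
have E1 : W 0 0 0 * (W 0 1 1)^* = 1.
  apply: (mulIf snz); rewrite mul1r.
  transitivity (c * (W (-1) *m e1 R) 0 0 * (W 0 0 0)^* * (W 0 0 0 * (W 0 1 1)^*) * s%:C).
    by rewrite k1 mul1r.
  rewrite [in RHS]hss; move: A01; rewrite cjD !cjM !conjR (_ : (0:R)%:C = 0 :> C) // mul0r add0r mul1r => <-.
  rewrite d1J d2J; field; by rewrite ?d1nz ?d2nz.
have d12 : W 0 1 1 = W 0 0 0.
  have -> : W 0 0 0 = W 0 0 0 * (W 0 1 1)^* * W 0 1 1 by rewrite d2J; field.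
  by rewrite E1 mul1r.
have P0 := congr1 (fun v : 'cV[C]_2 => v 0 0) HP; have P1 := congr1 (fun v : 'cV[C]_2 => v 1 0) HP.
rewrite /= !scvE !Mcomb W01 W10 ?comb0 ?comb1 d12 in P0 P1.
have ha0 : 0 < a by case/andP: ha.
have ha0' : 0 < a' by case/andP: ha'.
have [haa k2] : a = a' /\ expi l' * W 0 0 0 = 1.
  apply: (@key R _ (expi t) (expi t') _ g _ g' ha0 ha0' hg hg' (expiU t) (expiU t')).
  - by move: P0 => <-; ring.
  - by move: P1 => <-; ring.
have hgg : g = g'.
  apply: psq => //; move: hg hg'; rewrite haa => hg hg'.
  by apply: (addrI (a' ^+ 2)); rewrite hg hg'.
have gnz : g%:C != 0 :> C by apply: cnz0.
have ett : expi t = expi t'.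
  apply: (mulIf gnz).
  transitivity (expi l' * W 0 0 0 * (expi t * g%:C)); first by rewrite k2 mul1r.
  by rewrite [in RHS]hgg -P1; ring.
by split => //; split => //; apply: expi_inj.
Qed.
End P3.

Local Close Scope complex_scope.

Theorem corollary3p3 (R : realType) :
  (forall (U : kernel R) (Phi : 'cV[R[i]]_2),
      isTI U -> unitvec Phi ->
      exists (r a t : R),
        0 <= r <= 1 /\ 0 <= a <= 1 /\ ueq U Phi (Ur r) (Phi_at a t)) /\
  (forall r r' a a' t t' : R,
      0 < r < 1 -> 0 < r' < 1 -> 0 < a < 1 -> 0 < a' < 1 ->
      0 <= t < 2 * pi -> 0 <= t' < 2 * pi ->
      (ueq (Ur r) (Phi_at a t) (Ur r') (Phi_at a' t') <->
       r = r' /\ a = a' /\ t = t')).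
Proof.
split.
  by move=> U Phi hU hP; apply: part1.
move=> r r' a a' t t' hr hr' ha ha' ht ht'; split; first exact: part2.
case=> <- [<- <-].
have A1 : adjm (1%:M : 'M[R[i]]_2) = 1%:M.
  by apply/matrixP => i j; rewrite !mxE rmorph_nat eq_sym.
exists 0, 0, (fun _ => 1%:M); split.
  by move=> n; rewrite A1 mulmx1.
split; last by rewrite expi0 scale1r mul1mx.
by move=> n m; rewrite A1 expi0 scale1r mul1mx mulmx1.
Qed.
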